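(* Let $X,Y,Z_1,\dots,Z_{k+1}$ ($k\ge1$) be random variables with finite state spaces. Then $\widetilde{UI}(X:Y\setminus(Z_1,\dots,Z_k))\ge\widetilde{UI}(X:Y\setminus(Z_1,\dots,Z_{k+1}))$.
   Context: For random variables $X,Y,Z$ with finite state spaces $\mathcal X,\mathcal Y,\mathcal Z$ and joint distribution $P$, let $\Delta$ be the set of all distributions on $\mathcal X\times\mathcal Y\times\mathcal Z$, $\Delta_P=\{Q\in\Delta: Q(X=x,Y=y)=P(X=x,Y=y)\text{ and }Q(X=x,Z=z)=P(X=x,Z=z)\ \forall x,y,z\}$, and $\widetilde{UI}(X:Y\setminus Z)=\min_{Q\in\Delta_P}MI_Q(X:Y|Z)$, where $MI_Q$ is conditional mutual information computed w.r.t. $Q$. Here $\widetilde{UI}(X:Y\setminus(Z_1,\dots,Z_m))$ means this definition applied with $Z$ the tuple $(Z_1,\dots,Z_m)$ (state space the product of the state spaces of the $Z_i$) and $P$ the joint distribution of $(X,Y,Z_1,\dots,Z_m)$; so $\Delta_P$ consists of distributions of $(X,Y,Z_1,\dots,Z_m)$ with the same $(X,Y)$-marginal and the same $(X,Z_1,\dots,Z_m)$-marginal as $P$. *)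

(* Defs.v *)
From HB Require Import structures.
From mathcomp Require Import all_boot.
From Stdlib Require Import Reals ClassicalEpsilon.

Set Implicit Arguments.
Unset Strict Implicit.
Unset Printing Implicit Defensive.

Local Open Scope R_scope.

Lemma Rplus_assoc' : associative Rplus.
Proof. by move=> a b c; rewrite Rplus_assoc. Qed.
HB.instance Definition _ :=
  Monoid.isComLaw.Build R 0%R Rplus Rplus_assoc' Rplus_comm Rplus_0_l.

Definition rsum (T : finType) (f : T -> R) : R := \big[Rplus/0%R]_(t : T) f t.

Definition is_dist (T : finType) (p : T -> R) : Prop :=
  (forall t, 0 <= p t) /\ rsum p = 1.

Section CMI.
Variables (TX TY TZ : finType).

Definition margXY (Q : TX * TY * TZ -> R) (x : TX) (y : TY) : R :=
  rsum (fun z : TZ => Q (x, y, z)).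
Definition margXZ (Q : TX * TY * TZ -> R) (x : TX) (z : TZ) : R :=
  rsum (fun y : TY => Q (x, y, z)).
Definition margYZ (Q : TX * TY * TZ -> R) (y : TY) (z : TZ) : R :=
  rsum (fun x : TX => Q (x, y, z)).
Definition margZ (Q : TX * TY * TZ -> R) (z : TZ) : R :=
  rsum (fun xy : TX * TY => Q (xy.1, xy.2, z)).

Definition CMI (Q : TX * TY * TZ -> R) : R :=
  rsum (fun t : TX * TY * TZ =>
    let: (x, y, z) := t in
    if Req_EM_T (Q (x, y, z)) 0 then 0
    else Q (x, y, z) *
         ln (Q (x, y, z) * margZ Q z / (margXZ Q x z * margYZ Q y z))).

Definition DeltaP (P Q : TX * TY * TZ -> R) : Prop :=
  is_dist Q /\
  (forall x y, margXY Q x y = margXY P x y) /\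
  (forall x z, margXZ Q x z = margXZ P x z).

Definition is_min_UI (P : TX * TY * TZ -> R) (r : R) : Prop :=
  (exists Q, DeltaP P Q /\ CMI Q = r) /\
  (forall Q, DeltaP P Q -> r <= CMI Q).

Definition UI (P : TX * TY * TZ -> R) : R :=
  epsilon (inhabits 0%R) (is_min_UI P).
End CMI.

(* The state space of the tuple (Z_1,...,Z_n), where Z_{i+1} has state space TZ i. *)
Definition Ztuple (TZ : nat -> finType) (n : nat) : finType :=
  {dffun forall i : 'I_n, TZ (nat_of_ord i)}.

Definition Zinit (TZ : nat -> finType) (k : nat) (z : Ztuple TZ k.+1) : Ztuple TZ k :=
  @finfun _ (fun i : 'I_k => TZ (nat_of_ord i)) (fun i => z (widen_ord (leqnSn k) i)).

Definition marg_init (TX TY : finType) (TZ : nat -> finType) (k : nat)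
  (P : TX * TY * Ztuple TZ k.+1 -> R) : TX * TY * Ztuple TZ k -> R :=
  fun t => rsum (fun z : Ztuple TZ k.+1 =>
                   if Zinit z == t.2 then P (t.1.1, t.1.2, z) else 0).

(* Main.v *)
Require Import Defs.
From HB Require Import structures.
From mathcomp Require Import all_boot.
From Stdlib Require Import Reals Lra.
Open Scope R_scope.

Lemma ln_nonpos x : x <= 0 -> ln x = 0.
Proof. intros H; unfold ln; destruct (Rlt_dec 0 x); [exfalso; lra|reflexivity]. Qed.

Lemma ln_le_sub1 x : 0 < x -> ln x <= x - 1.
Proof.
intros Hx. destruct (Rle_or_lt (ln x) (x - 1)) as [H|H]; auto.
exfalso. apply exp_increasing in H. rewrite (exp_ln x Hx) in H.
pose proof (exp_ineq1_le (x - 1)). lra.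
Qed.

Lemma hcont x : continuity_pt (fun q => q * ln q) x.
Proof.
destruct (Rlt_or_le 0 x) as [Hx|Hx].
- assert (D : derivable_pt_lim (fun q => q * ln q) x (1 * ln x + x * / x)).
  { apply (derivable_pt_lim_mult id ln x 1 (/ x)).
    apply derivable_pt_lim_id. apply derivable_pt_lim_ln; auto. }
  apply (derivable_continuous_pt _ x (exist _ _ D)).
- destruct (Rle_lt_or_eq_dec _ _ Hx) as [Hn|He].
  + intros eps Heps. exists (- x). split; [lra|].
    intros y [_ Hy]. simpl in *. unfold Rdist in *.
    rewrite (ln_nonpos x Hx).
    apply Rabs_def2 in Hy. rewrite (ln_nonpos y (ltac:(lra))).
    rewrite Rmult_0_r Rmult_0_r Rminus_0_r Rabs_R0. lra.
  + subst x. intros eps Heps.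
    exists (Rmin 1 ((eps / 2) * (eps / 2))). split.
    { apply Rmin_pos; [lra|]. apply Rmult_lt_0_compat; lra. }
    intros y [_ Hy]. simpl in *. unfold Rdist in *.
    rewrite Rmult_0_l Rminus_0_r.
    rewrite Rminus_0_r in Hy.
    destruct (Rle_or_lt y 0) as [Hy0|Hy0].
    { rewrite (ln_nonpos y Hy0) Rmult_0_r Rabs_R0. lra. }
    rewrite (Rabs_right y (ltac:(lra))) in Hy.
    assert (Hy1 : y < 1) by (pose proof (Rmin_l 1 ((eps / 2) * (eps / 2))); lra).
    assert (Hy2 : y < (eps/2) * (eps/2)) by (pose proof (Rmin_r 1 ((eps / 2) * (eps / 2))); lra).
    assert (Hs : 0 < sqrt y) by (apply sqrt_lt_R0; lra).
    assert (Hss : sqrt y * sqrt y = y) by (apply sqrt_sqrt; lra).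
    assert (Hse : sqrt y < eps / 2).
    { rewrite -(sqrt_square (eps/2) (ltac:(lra))). apply sqrt_lt_1; nra. }
    assert (Hl : ln y = 2 * ln (sqrt y)).
    { rewrite -{1}Hss (ln_mult _ _ Hs Hs). ring. }
    assert (Hneg : ln y < 0).
    { rewrite -ln_1. apply ln_increasing; lra. }
    assert (Hb : - ln (sqrt y) <= / sqrt y - 1).
    { rewrite -(ln_Rinv _ Hs). apply ln_le_sub1. apply Rinv_0_lt_compat; lra. }
    rewrite Rabs_left.
    2:{ nra. }
    rewrite Hl.
    assert (E : - (y * (2 * ln (sqrt y))) = 2 * (sqrt y * sqrt y) * (- ln (sqrt y))) by (rewrite Hss; ring).
    rewrite E.
    assert (2 * (sqrt y * sqrt y) * (- ln (sqrt y)) <= 2 * (sqrt y * sqrt y) * (/ sqrt y - 1)).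
    { apply Rmult_le_compat_l; [|exact Hb]. nra. }
    assert (2 * (sqrt y * sqrt y) * (/ sqrt y - 1) = 2 * sqrt y - 2 * (sqrt y * sqrt y)).
    { field. lra. }
    lra.
Qed.

Section RS.
Variable T : finType.
Implicit Types f g : T -> R.

Lemma rsum_ext f g : (forall t, f t = g t) -> rsum f = rsum g.
Proof. by move=> H; apply: eq_bigr => t _; apply: H. Qed.

Lemma rsum_add f g : rsum (fun t => f t + g t) = rsum f + rsum g.
Proof. by rewrite /rsum big_split. Qed.

Lemma rsum_const0 : rsum (fun _ : T => 0) = 0.
Proof. by rewrite /rsum big1. Qed.

Lemma rsum_scal c f : c * rsum f = rsum (fun t => c * f t).
Proof.
rewrite /rsum; elim/big_rec2: _ => [|i y1 y2 _ <-]; first by rewrite Rmult_0_r.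
by rewrite Rmult_plus_distr_l.
Qed.

Lemma rsum_scalr c f : rsum f * c = rsum (fun t => f t * c).
Proof. rewrite Rmult_comm rsum_scal; apply: rsum_ext => t; apply: Rmult_comm. Qed.

Lemma rsum_opp f : rsum (fun t => - f t) = - rsum f.
Proof.
rewrite /rsum; elim/big_rec2: _ => [|i y1 y2 _ ->]; first by rewrite Ropp_0.
by rewrite Ropp_plus_distr.
Qed.

Lemma rsum_le f g : (forall t, f t <= g t) -> rsum f <= rsum g.
Proof.
move=> H; rewrite /rsum; elim/big_rec2: _ => [|i y1 y2 _ Hy]; first lra.
by have := H i; lra.
Qed.

Lemma rsum_nonneg f : (forall t, 0 <= f t) -> 0 <= rsum f.
Proof. move=> H; rewrite -rsum_const0; exact: rsum_le. Qed.

Lemma rsum_term_le f i : (forall t, 0 <= f t) -> f i <= rsum f.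
Proof.
move=> H; rewrite /rsum (bigD1 i) //=.
have : 0 <= \big[Rplus/0]_(j | j != i) f j.
  by elim/big_rec: _ => [|j y _ Hy]; [lra| have := H j; lra].
lra.
Qed.

Lemma rsum_if (b : bool) f : rsum (fun t => if b then f t else 0) = if b then rsum f else 0.
Proof. by case: b => //; rewrite rsum_const0. Qed.
End RS.

Lemma rsum_exchange (A B : finType) (F : A -> B -> R) :
  rsum (fun a => rsum (fun b => F a b)) = rsum (fun b => rsum (fun a => F a b)).
Proof. by rewrite /rsum exchange_big. Qed.

Lemma rsum_pair (A B : finType) (F : A * B -> R) :
  rsum F = rsum (fun a => rsum (fun b => F (a, b))).
Proof. by rewrite /rsum pair_bigA; apply: eq_bigr => -[a b]. Qed.

Lemma rsum_part (A B : finType) (pi : A -> B) (F : A -> R) :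
  rsum F = rsum (fun b => rsum (fun a => if pi a == b then F a else 0)).
Proof.
rewrite rsum_exchange; apply: rsum_ext => a.
by rewrite /rsum -big_mkcond /= (big_pred1 (pi a)) // => b; rewrite eq_sym.
Qed.

Lemma Rinv_nonneg x : 0 <= x -> 0 <= / x.
Proof.
move=> H; case: (Req_EM_T x 0) => [->|Hx]; first by rewrite Rinv_0; lra.
by apply: Rlt_le; apply: Rinv_0_lt_compat; lra.
Qed.

Section Marg.
Variables TX TY TZ : finType.
Implicit Type Q : TX * TY * TZ -> R.

Lemma rsum3 Q : rsum Q = rsum (fun x => rsum (fun y => rsum (fun z => Q (x, y, z)))).
Proof.
rewrite rsum_pair rsum_pair; apply: rsum_ext => x; apply: rsum_ext => y.
by rewrite /= ; apply: rsum_ext.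
Qed.

Lemma rsum3XY Q : rsum Q = rsum (fun x => rsum (fun y => margXY Q x y)).
Proof. exact: rsum3. Qed.

Lemma margZ_YZ Q z : margZ Q z = rsum (fun y => margYZ Q y z).
Proof.
rewrite /margZ rsum_pair rsum_exchange; apply: rsum_ext => y.
exact: rsum_ext.
Qed.

Lemma rsum_margZ Q : rsum Q = rsum (fun z => margZ Q z).
Proof.
rewrite rsum3 rsum_exchange.
rewrite (@rsum_ext _ _ (fun y => rsum (fun z => rsum (fun x => Q (x, y, z))))); last first.
  by move=> y; rewrite rsum_exchange.
rewrite rsum_exchange; apply: rsum_ext => z.
rewrite margZ_YZ; exact: rsum_ext.
Qed.

Lemma le_margXZ Q x y z : (forall t, 0 <= Q t) -> Q (x, y, z) <= margXZ Q x z.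
Proof. move=> H; exact: (rsum_term_le _ (fun y => Q (x, y, z)) y (fun _ => H _)). Qed.
Lemma le_margYZ Q x y z : (forall t, 0 <= Q t) -> Q (x, y, z) <= margYZ Q y z.
Proof. move=> H; exact: (rsum_term_le _ (fun x => Q (x, y, z)) x (fun _ => H _)). Qed.
Lemma le_margZ Q x y z : (forall t, 0 <= Q t) -> Q (x, y, z) <= margZ Q z.
Proof.
move=> H; exact: (rsum_term_le _ (fun xy : TX * TY => Q (xy.1, xy.2, z)) (x, y) (fun _ => H _)).
Qed.
Lemma margXZ_nonneg Q x z : (forall t, 0 <= Q t) -> 0 <= margXZ Q x z.
Proof. move=> H; apply: rsum_nonneg => ?; exact: H. Qed.
Lemma margYZ_nonneg Q y z : (forall t, 0 <= Q t) -> 0 <= margYZ Q y z.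
Proof. move=> H; apply: rsum_nonneg => ?; exact: H. Qed.
Lemma margZ_nonneg Q z : (forall t, 0 <= Q t) -> 0 <= margZ Q z.
Proof. move=> H; apply: rsum_nonneg => ?; exact: H. Qed.
End Marg.

Section Constr.
Variables TX TY TZ TZ' : finType.
Variable pi : TZ -> TZ'.
Variable P : TX * TY * TZ -> R.
Hypothesis hP : is_dist P.

Definition Pm (t : TX * TY * TZ') : R :=
  rsum (fun z => if pi z == t.2 then P (t.1.1, t.1.2, z) else 0).

Lemma Pm_XY x y : margXY Pm x y = margXY P x y.
Proof. by rewrite /margXY /Pm /= [in RHS](rsum_part _ _ pi). Qed.

Lemma Pm_XZ x z' : margXZ Pm x z' = rsum (fun z => if pi z == z' then margXZ P x z else 0).
Proof.
rewrite /margXZ /Pm /= rsum_exchange; apply: rsum_ext => z.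
by rewrite rsum_if.
Qed.

Lemma Pm_nonneg t : 0 <= Pm t.
Proof.
apply: rsum_nonneg => z; case: (_ == _); [exact: hP.1| lra].
Qed.

Lemma Pm_dist : is_dist Pm.
Proof.
split; first exact: Pm_nonneg.
rewrite rsum3XY (@rsum_ext _ _ (fun x => rsum (fun y => margXY P x y))).
  by rewrite -rsum3XY; exact: hP.2.
by move=> x; apply: rsum_ext => y; rewrite Pm_XY.
Qed.

Lemma P_XZ_le x z : margXZ P x z <= margXZ Pm x (pi z).
Proof.
rewrite Pm_XZ.
have := rsum_term_le _ (fun z0 => if pi z0 == pi z then margXZ P x z0 else 0) z.
rewrite eqxx; apply=> z0; case: (_ == _); last lra.
apply: margXZ_nonneg; exact: hP.1.
Qed.

Variable Q : TX * TY * TZ' -> R.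
Hypothesis hQ : DeltaP Pm Q.

Definition r x z := margXZ P x z * / margXZ Pm x (pi z).
Definition Q' (t : TX * TY * TZ) : R := Q (t.1.1, t.1.2, pi t.2) * r t.1.1 t.2.

Lemma Qnn t : 0 <= Q t. Proof. exact: hQ.1.1. Qed.

Lemma r_nonneg x z : 0 <= r x z.
Proof.
apply: Rmult_le_pos; first by apply: margXZ_nonneg; exact: hP.1.
apply: Rinv_nonneg; apply: margXZ_nonneg; exact: Pm_nonneg.
Qed.

Lemma Q_le_a x y z' : Q (x, y, z') <= margXZ Pm x z'.
Proof. rewrite -hQ.2.2; apply: le_margXZ; exact: Qnn. Qed.

Lemma sum_r x z' phi : (margXZ Pm x z' = 0 -> phi = 0) ->
  phi * rsum (fun z => if pi z == z' then r x z else 0) = phi.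
Proof.
move=> Hphi; case: (Req_EM_T (margXZ Pm x z') 0) => Ha.
  by rewrite (Hphi Ha) Rmult_0_l.
rewrite (@rsum_ext _ _ (fun z => (if pi z == z' then margXZ P x z else 0) * / margXZ Pm x z')).
  by rewrite -rsum_scalr -Pm_XZ Rinv_r // Rmult_1_r.
by move=> z; rewrite /r; case: eqP => [->|_]; [|rewrite Rmult_0_l].
Qed.

Lemma Q'_XZ0 x z : margXZ Q' x z = margXZ Q x (pi z) * r x z.
Proof. by rewrite /margXZ rsum_scalr. Qed.

Lemma Q'_XZ x z : margXZ Q' x z = margXZ P x z.
Proof.
rewrite Q'_XZ0 hQ.2.2 /r.
case: (Req_EM_T (margXZ Pm x (pi z)) 0) => Ha.
  have := P_XZ_le x z; have := @margXZ_nonneg _ _ _ P x z hP.1; rewrite Ha => ? ?.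
  have -> : margXZ P x z = 0 by lra.
  lra.
by field.
Qed.

Lemma Q'_XY x y : margXY Q' x y = margXY P x y.
Proof.
rewrite -Pm_XY -hQ.2.1 /margXY /Q' /= (rsum_part _ _ pi).
apply: rsum_ext => z'.
rewrite (@rsum_ext _ _ (fun z => Q (x, y, z') * (if pi z == z' then r x z else 0))).
  rewrite -rsum_scal sum_r // => Ha.
  by have := Q_le_a x y z'; have := Qnn (x, y, z'); rewrite Ha; lra.
by move=> z; case: eqP => [->|_]; lra.
Qed.

Lemma Q'_nonneg t : 0 <= Q' t.
Proof. apply: Rmult_le_pos; [exact: Qnn | exact: r_nonneg]. Qed.

Lemma Q'_Delta : DeltaP P Q'.
Proof.
split; [split|split].
- exact: Q'_nonneg.
- rewrite rsum3XY (@rsum_ext _ _ (fun x => rsum (fun y => margXY P x y))).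
    by rewrite -rsum3XY; exact: hP.2.
  by move=> x; apply: rsum_ext => y; rewrite Q'_XY.
- exact: Q'_XY.
- exact: Q'_XZ.
Qed.

Definition Lq x y z' := Q (x, y, z') * margZ Q z' / (margXZ Q x z' * margYZ Q y z').

Lemma lift : CMI Q = rsum (fun t : TX * TY * TZ =>
  if Req_EM_T (Q' t) 0 then 0 else Q' t * ln (Lq t.1.1 t.1.2 (pi t.2))).
Proof.
rewrite /CMI rsum3 [RHS]rsum3; apply: rsum_ext => x; apply: rsum_ext => y => /=.
set Phi := fun z' => if Req_EM_T (Q (x, y, z')) 0 then 0 else Q (x, y, z') * ln (Lq x y z').
rewrite (@rsum_ext _ _ (fun z' => Phi z' * rsum (fun z => if pi z == z' then r x z else 0))); last first.
  move=> z'; rewrite sum_r // => Ha; rewrite /Phi.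
  have := Q_le_a x y z'; have := Qnn (x, y, z'); rewrite Ha => ? ?.
  have E : Q (x, y, z') = 0 by lra.
  by case: Req_EM_T.
rewrite [RHS](rsum_part _ _ pi); apply: rsum_ext => z'.
rewrite rsum_scal; apply: rsum_ext => z.
case: eqP => [<-|_]; last by rewrite Rmult_0_r.
rewrite /Phi /Q' /=.
destruct (Req_EM_T (Q (x, y, pi z)) 0) as [E1|E1];
  destruct (Req_EM_T (Q (x, y, pi z) * r x z) 0) as [E2|E2].
- by rewrite Rmult_0_l.
- by exfalso; apply: E2; rewrite E1 Rmult_0_l.
- simpl; transitivity ((Q (x, y, pi z) * r x z) * ln (Lq x y (pi z))); first ring.
  by rewrite E2; ring.
- by simpl; ring.
Qed.

Definition cc y z := margYZ Q y (pi z) * margZ Q' z * / (margZ Q (pi z) * margYZ Q' y z).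

Lemma term_le x y z :
  (if Req_EM_T (Q' (x, y, z)) 0 then 0 else
     Q' (x, y, z) * ln (Q' (x, y, z) * margZ Q' z / (margXZ Q' x z * margYZ Q' y z)))
  <= (if Req_EM_T (Q' (x, y, z)) 0 then 0 else Q' (x, y, z) * ln (Lq x y (pi z)))
     - (Q' (x, y, z) - Q' (x, y, z) * cc y z).
Proof.
destruct (Req_EM_T (Q' (x, y, z)) 0) as [E|E]; cbn [is_left].
  by rewrite E; lra.
have Hq'0 := Q'_nonneg (x, y, z).
have Hq' : 0 < Q' (x, y, z) by lra.
have Eq' : Q' (x, y, z) = Q (x, y, pi z) * r x z by [].
have Hq0 := Qnn (x, y, pi z).
have Hr0 := r_nonneg x z.
have Hq : 0 < Q (x, y, pi z).
  case: (Req_EM_T (Q (x, y, pi z)) 0) => H; last lra.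
  by exfalso; apply: E; rewrite Eq' H Rmult_0_l.
have Hr : 0 < r x z.
  case: (Req_EM_T (r x z) 0) => H; last lra.
  by exfalso; apply: E; rewrite Eq' H Rmult_0_r.
have Ha := @le_margXZ _ _ _ Q x y (pi z) Qnn.
have Hb := @le_margYZ _ _ _ Q x y (pi z) Qnn.
have Hm := @le_margZ _ _ _ Q x y (pi z) Qnn.
have Hb' := @le_margYZ _ _ _ Q' x y z Q'_nonneg.
have Hm' := @le_margZ _ _ _ Q' x y z Q'_nonneg.
have Ea' := Q'_XZ0 x z.
set q := Q (x, y, pi z) in Hq Hq0 Eq' Ha Hb Hm.
set q' := Q' (x, y, z) in E Hq'0 Hq' Eq' Hb' Hm' *.
set a := margXZ Q x (pi z) in Ha Ea'.
set b := margYZ Q y (pi z) in Hb.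
set m := margZ Q (pi z) in Hm.
set b' := margYZ Q' y z in Hb'.
set m' := margZ Q' z in Hm'.
set rr := r x z in Eq' Hr Hr0 Ea'.
rewrite Ea' /Lq -/q -/a -/b -/m /cc -/b -/m -/b' -/m'.
have Hc : 0 < b * m' * / (m * b').
  apply: Rmult_lt_0_compat; first by apply: Rmult_lt_0_compat; lra.
  by apply: Rinv_0_lt_compat; apply: Rmult_lt_0_compat; lra.
have HL : q' * m' / (a * rr * b') = q * m / (a * b) * (b * m' * / (m * b')).
  rewrite Eq'; field; repeat split; lra.
have HL0 : 0 < q * m / (a * b).
  apply: Rmult_lt_0_compat; first by apply: Rmult_lt_0_compat; lra.
  by apply: Rinv_0_lt_compat; apply: Rmult_lt_0_compat; lra.
rewrite HL ln_mult //.
have := ln_le_sub1 _ Hc.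
set cv := b * m' * / (m * b').
set lc := ln cv.
move=> Hlc.
have := Rmult_le_compat_l q' _ _ (Rlt_le _ _ Hq') Hlc.
nra.
Qed.

Lemma corr : rsum (fun t : TX * TY * TZ => Q' t * cc t.1.2 t.2) <= 1.
Proof.
rewrite rsum3 rsum_exchange.
rewrite (@rsum_ext _ _ (fun y => rsum (fun z => margYZ Q' y z * cc y z))); last first.
  move=> y; rewrite rsum_exchange; apply: rsum_ext => z.
  by rewrite /margYZ rsum_scalr.
apply: Rle_trans (_ : rsum (fun y => rsum (fun z => margYZ Q y (pi z) * (margZ Q' z * / margZ Q (pi z)))) <= 1).
  apply: rsum_le => y; apply: rsum_le => z.
  rewrite /cc.
  have Hb'0 := @margYZ_nonneg _ _ _ Q' y z Q'_nonneg.
  have Hb0 := @margYZ_nonneg _ _ _ Q y (pi z) Qnn.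
  have Hm'0 := @margZ_nonneg _ _ _ Q' z Q'_nonneg.
  have Hm0 := @margZ_nonneg _ _ _ Q (pi z) Qnn.
  have Hmi := Rinv_nonneg _ Hm0.
  case: (Req_EM_T (margYZ Q' y z) 0) => Hb'.
    rewrite Hb' Rmult_0_l.
    by apply: Rmult_le_pos => //; apply: Rmult_le_pos.
  rewrite Rinv_mult.
  have -> : margYZ Q' y z * (margYZ Q y (pi z) * margZ Q' z * (/ margZ Q (pi z) * / margYZ Q' y z))
    = (margYZ Q' y z * / margYZ Q' y z) * (margYZ Q y (pi z) * (margZ Q' z * / margZ Q (pi z))) by ring.
  rewrite Rinv_r // Rmult_1_l; lra.
rewrite rsum_exchange.
apply: Rle_trans (_ : rsum (fun z => margZ Q' z) <= 1).
  apply: rsum_le => z.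
  rewrite -rsum_scalr -margZ_YZ.
  have Hm'0 := @margZ_nonneg _ _ _ Q' z Q'_nonneg.
  case: (Req_EM_T (margZ Q (pi z)) 0) => Hm.
    by rewrite Hm Rmult_0_l.
  have -> : margZ Q (pi z) * (margZ Q' z * / margZ Q (pi z)) = margZ Q' z * (margZ Q (pi z) * / margZ Q (pi z)) by ring.
  rewrite Rinv_r // Rmult_1_r; lra.
rewrite -rsum_margZ; have := (Q'_Delta).1.2; lra.
Qed.

Lemma CMI_le : CMI Q' <= CMI Q.
Proof.
rewrite lift.
apply: Rle_trans (_ : CMI Q' <= rsum (fun t : TX * TY * TZ =>
  (if Req_EM_T (Q' t) 0 then 0 else Q' t * ln (Lq t.1.1 t.1.2 (pi t.2)))
  - (Q' t - Q' t * cc t.1.2 t.2)) ) _.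
  rewrite /CMI rsum3 [X in _ <= X]rsum3.
  apply: rsum_le => x; apply: rsum_le => y; apply: rsum_le => z.
  exact: term_le.
set X := (fun t : TX * TY * TZ => if Req_EM_T (Q' t) 0 then 0 else Q' t * ln (Lq t.1.1 t.1.2 (pi t.2))).
rewrite (@rsum_ext _ _ (fun t => X t + ((fun t => - Q' t) t + (fun t => Q' t * cc t.1.2 t.2) t))); last first.
  by move=> t; rewrite /X; ring.
rewrite rsum_add rsum_add rsum_opp.
have := corr; have := (Q'_Delta).1.2.
move=> H1 H2; set S := rsum (fun t => Q' t * cc t.1.2 t.2) in H2 *; lra.
Qed.
End Constr.

From mathcomp Require Import all_order all_algebra.
From mathcomp Require Import all_classical all_reals all_analysis.
From mathcomp Require Import Rstruct Rstruct_topology.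
From Stdlib Require Import Reals Lra ClassicalEpsilon.
Open Scope R_scope.

Lemma hcont' : continuous (fun q : R => q * ln q).
Proof. by move=> x; apply/continuity_pt_cvg; exact: hcont. Qed.

Lemma cont_plus (S : topologicalType) (f g : S -> R) :
  continuous f -> continuous g -> continuous (fun s => f s + g s).
Proof. move=> cf cg s. have := (@continuousD R R^o S f g s (cf s) (cg s)). exact. Qed.

Lemma cont_opp (S : topologicalType) (f : S -> R) :
  continuous f -> continuous (fun s => - f s).
Proof. move=> cf s. have := (@continuousN R R^o S f s (cf s)). exact. Qed.

Lemma cont_h (S : topologicalType) (f : S -> R) :
  continuous f -> continuous (fun s => f s * ln (f s)).
Proof. move=> cf s. exact (continuous_comp (cf s) (hcont' (f s))). Qed.

Lemma cont_rsum (S : topologicalType) (I : finType) (F : I -> S -> R) :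
  (forall i, continuous (F i)) -> continuous (fun s => rsum (fun i => F i s)).
Proof.
move=> cF; rewrite /rsum; elim: (index_enum I) => [|a l IH].
  have -> : (fun s : S => \big[Rplus/0]_(i <- [::]) F i s) = (fun _ => 0).
    by apply: funext => s; rewrite big_nil.
  exact: cst_continuous.
have -> : (fun s : S => \big[Rplus/0]_(i <- a :: l) F i s) =
  (fun s => F a s + \big[Rplus/0]_(i <- l) F i s).
  by apply: funext => s; rewrite big_cons.
exact: cont_plus.
Qed.

Lemma cont_proj (T : finType) (t : T) : continuous (fun Q : {ptws T -> R} => Q t).
Proof. exact: (@proj_continuous T (fun _ => R) t). Qed.

Lemma lin1 (T : finType) (a b c d : T -> R) :
  rsum (fun t => a t + b t - c t - d t) = rsum a + rsum b - rsum c - rsum d.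
Proof. by rewrite /Rminus !rsum_add !rsum_opp. Qed.

Section Exist.
Variables TX TY TZ : finType.
Implicit Type Q : TX * TY * TZ -> R.

Definition hh (q : R) := q * ln q.

Definition G Q : R :=
  rsum (fun x => rsum (fun y => rsum (fun z => hh (Q (x, y, z)))))
  + rsum (fun z => hh (margZ Q z))
  - rsum (fun x => rsum (fun z => hh (margXZ Q x z)))
  - rsum (fun y => rsum (fun z => hh (margYZ Q y z))).

Lemma CMI_G Q : (forall t, 0 <= Q t) -> CMI Q = G Q.
Proof.
move=> Hn.
have Eterm : forall x y z,
  (if Req_EM_T (Q (x, y, z)) 0 then 0 else Q (x, y, z) *
     ln (Q (x, y, z) * margZ Q z / (margXZ Q x z * margYZ Q y z)))
  = hh (Q (x, y, z)) + Q (x, y, z) * ln (margZ Q z)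
    - Q (x, y, z) * ln (margXZ Q x z) - Q (x, y, z) * ln (margYZ Q y z).
  move=> x y z; rewrite /hh.
  destruct (Req_EM_T (Q (x, y, z)) 0) as [E|E]; cbn [is_left].
    by rewrite E; ring.
  have Hq : 0 < Q (x, y, z) by have := Hn (x, y, z); lra.
  have Ha := @le_margXZ _ _ _ Q x y z Hn.
  have Hb := @le_margYZ _ _ _ Q x y z Hn.
  have Hm := @le_margZ _ _ _ Q x y z Hn.
  have Hqm : 0 < Q (x, y, z) * margZ Q z by apply: Rmult_lt_0_compat; lra.
  have Hab : 0 < margXZ Q x z * margYZ Q y z by apply: Rmult_lt_0_compat; lra.
  rewrite /Rdiv (ln_mult _ _ Hqm (Rinv_0_lt_compat _ Hab)) (ln_mult (Q (x, y, z)) (margZ Q z) Hq (ltac:(lra))).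
  rewrite (ln_Rinv _ Hab) (ln_mult (margXZ Q x z) (margYZ Q y z) (ltac:(lra)) (ltac:(lra))).
  ring.
rewrite /CMI rsum3.
rewrite (@rsum_ext _ _ (fun x => rsum (fun y => rsum (fun z =>
  hh (Q (x, y, z)) + Q (x, y, z) * ln (margZ Q z)
    - Q (x, y, z) * ln (margXZ Q x z) - Q (x, y, z) * ln (margYZ Q y z))))); last first.
  by move=> x; apply: rsum_ext => y; apply: rsum_ext => z; rewrite -Eterm.
rewrite (@rsum_ext _ _ (fun x =>
   rsum (fun y => rsum (fun z => hh (Q (x, y, z))))
 + rsum (fun y => rsum (fun z => Q (x, y, z) * ln (margZ Q z)))
 - rsum (fun y => rsum (fun z => Q (x, y, z) * ln (margXZ Q x z)))
 - rsum (fun y => rsum (fun z => Q (x, y, z) * ln (margYZ Q y z))))); last first.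
  move=> x; rewrite -lin1; apply: rsum_ext => y; exact: lin1.
rewrite lin1 /G.
have I1 : rsum (fun x => rsum (fun y => rsum (fun z => Q (x, y, z) * ln (margZ Q z))))
  = rsum (fun z => hh (margZ Q z)).
  rewrite (@rsum_ext _ _ (fun x => rsum (fun z => rsum (fun y => Q (x, y, z) * ln (margZ Q z))))); last first.
    by move=> x; exact: rsum_exchange.
  rewrite rsum_exchange; apply: rsum_ext => z.
  have Em : margZ Q z = rsum (fun x => rsum (fun y => Q (x, y, z))) by rewrite /margZ rsum_pair.
  rewrite /hh Em rsum_scalr; apply: rsum_ext => x; by rewrite rsum_scalr.
have I2 : rsum (fun x => rsum (fun y => rsum (fun z => Q (x, y, z) * ln (margXZ Q x z))))
  = rsum (fun x => rsum (fun z => hh (margXZ Q x z))).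
  apply: rsum_ext => x; rewrite rsum_exchange; apply: rsum_ext => z.
  by rewrite /hh {3}/margXZ rsum_scalr.
have I3 : rsum (fun x => rsum (fun y => rsum (fun z => Q (x, y, z) * ln (margYZ Q y z))))
  = rsum (fun y => rsum (fun z => hh (margYZ Q y z))).
  rewrite rsum_exchange; apply: rsum_ext => y; rewrite rsum_exchange; apply: rsum_ext => z.
  by rewrite /hh {3}/margYZ rsum_scalr.
by rewrite I1 I2 I3.
Qed.

Lemma G_cont : continuous (fun Q : {ptws TX * TY * TZ -> R} => G Q).
Proof.
rewrite /G /Rminus.
apply: cont_plus; [apply: cont_plus; [apply: cont_plus|]|]; try apply: cont_opp;
  repeat (apply: cont_rsum => ?); apply: cont_h; rewrite ?/margZ ?/margXZ ?/margYZ;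
  repeat (apply: cont_rsum => ?); exact: cont_proj.
Qed.
End Exist.

Local Open Scope classical_set_scope.
Local Open Scope R_scope.

Lemma closed_all (S : topologicalType) (I : Type) (Pr : I -> S -> Prop) :
  (forall i, closed [set s | Pr i s]) -> closed [set s | forall i, Pr i s].
Proof.
move=> H.
have -> : [set s | forall i, Pr i s] = \bigcap_(i in [set: I]) [set s | Pr i s].
  apply/seteqP; split => s /= Hs.
    by move=> i _; exact: Hs.
  by move=> i; apply: (Hs i).
by apply: closed_bigI => i _; exact: H.
Qed.

Lemma closed_eqf (S : topologicalType) (f : S -> R) (c : R) :
  continuous f -> closed [set s | f s = c].
Proof.
move=> cf; have -> : [set s | f s = c] = f @^-1` [set y | y = c] by [].
by apply: preimage_closed; [move=> s _; exact: cf | exact: closed_eq].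
Qed.

Lemma closed_ge0 (S : topologicalType) (f : S -> R) :
  continuous f -> closed [set s | 0 <= f s].
Proof.
move=> cf; have -> : [set s | 0 <= f s] = f @^-1` [set y | (0 <= y)%O].
  by apply/seteqP; split => s /= Hs; apply/RleP.
by apply: preimage_closed; [move=> s _; exact: cf | exact: closed_ge].
Qed.

Section Exist2.
Variables TX TY TZ : finType.
Variable P : TX * TY * TZ -> R.
Hypothesis hP : is_dist P.

Definition Aset : set {ptws TX * TY * TZ -> R} := [set Q | DeltaP P Q].

Lemma Aset_closed : closed Aset.
Proof.
change (closed (([set Q : {ptws TX * TY * TZ -> R} | forall t, 0 <= Q t] `&` [set Q | rsum Q = 1]) `&`
  ([set Q | forall x y, margXY Q x y = margXY P x y] `&` [set Q | forall x z, margXZ Q x z = margXZ P x z]))).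
apply: closedI; apply: closedI.
- by apply: closed_all => t; apply: closed_ge0; exact: cont_proj.
- by apply: closed_eqf; apply: cont_rsum => t; exact: cont_proj.
- apply: closed_all => x; apply: closed_all => y; apply: closed_eqf.
  by apply: cont_rsum => z; exact: cont_proj.
- apply: closed_all => x; apply: closed_all => z; apply: closed_eqf.
  by apply: cont_rsum => y; exact: cont_proj.
Qed.

Definition Box : set {ptws TX * TY * TZ -> R} :=
  [set Q | forall t, (`[0%R, 1%R] : set R) (Q t)].

Lemma Box_compact : compact.compact Box.
Proof.
have := @tychonoff (TX * TY * TZ)%type (fun _ => R) (fun _ => `[0%R, 1%R]) (fun _ => @segment_compact R 0%R 1%R).
exact.
Qed.

Lemma Aset_Box : Aset `<=` Box.
Proof.
move=> Q [[Hn H1] _] t /=.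
have Hle := rsum_term_le _ Q t Hn.
rewrite in_itv /=; apply/andP; split; apply/RleP; [exact: Hn | lra].
Qed.

Lemma Aset_compact : compact.compact Aset.
Proof.
have -> : Aset = Box `&` Aset by apply/seteqP; split => Q //= HQ; [split=> //; exact: Aset_Box| case: HQ].
apply: compact_closedI; [exact: Box_compact | exact: Aset_closed].
Qed.

Lemma exists_min : exists r, is_min_UI P r.
Proof.
have A0 : Aset !=set0.
  by exists P; split => //; split.
have := @compact_EVT_min {ptws TX * TY * TZ -> R} R (@G TX TY TZ) Aset A0 Aset_compact (continuous_subspaceT (@G_cont TX TY TZ)).
move=> [c cA Hc]; exists (CMI c).
have cA' : DeltaP P c by rewrite in_setE in cA.
split; first by exists c.
move=> Q HQ.
rewrite (@CMI_G _ _ _ c cA'.1.1) (@CMI_G _ _ _ Q HQ.1.1).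
apply/RleP; apply: Hc; rewrite in_setE; exact: HQ.
Qed.

Lemma UI_spec : is_min_UI P (UI P).
Proof. rewrite /UI; apply: ClassicalEpsilon.epsilon_spec; exact: exists_min. Qed.
End Exist2.

Theorem mainTheorem15 (TX TY : finType) (TZ : nat -> finType) (k : nat)
  (hk : (1 <= k)%nat)
  (P : TX * TY * Ztuple TZ k.+1 -> R) (hP : is_dist P) :
  (UI (marg_init P) >= UI P)%coqR.
Proof.
have hPm : is_dist (marg_init P) := @Pm_dist TX TY _ _ (@Zinit TZ k) P hP.
have [[Qm [HQm Em]] _] := @UI_spec _ _ _ _ hPm.
have [_ Hmin] := @UI_spec _ _ _ _ hP.
have HD := @Q'_Delta TX TY _ _ (@Zinit TZ k) P hP Qm HQm.
have := Hmin _ HD.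
have := @CMI_le TX TY _ _ (@Zinit TZ k) P hP Qm HQm.
lra.
Qed.
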